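(* Let $X=(x_t,t\ge 0)$ and $Y=(y_t,t\ge0)$ be real-valued stochastic processes with continuous paths on a probability space $(\Omega,\mathcal F,\mathbb P)$. Assume $Y$ is strictly stationary and ergodic, and that $|x_t-y_t|\to 0$ almost surely as $t\to\infty$. Let $p\ge 1$ be an integer and $g\in\mathcal C^p(\mathbb R)$ with $k$-th derivative $g^{(k)}$, such that $\mathbb E|g^{(k)}(y_0)|<\infty$ for $k=0,1,\dots,p$, and $g^{(p)}$ is globally Lipschitz. Then $$\frac1T\int_0^T g(x_t)\,dt \longrightarrow \mathbb E\, g(y_0)\quad\text{almost surely as } T\to\infty.$$
   Context: ''Strictly stationary and ergodic'' is used in the sense that for every measurable $\varphi:\mathbb R\to\mathbb R$ with $\mathbb E|\varphi(y_0)|<\infty$ one has $\frac1T\int_0^T\varphi(y_t)\,dt\to\mathbb E\varphi(y_0)$ almost surely. *)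

(* Defs.v *)
From HB Require Import structures.
From mathcomp Require Import all_boot all_order all_algebra.
From mathcomp Require Import all_classical all_reals all_analysis.
Set Implicit Arguments. Unset Strict Implicit. Unset Printing Implicit Defensive.
Import Order.TTheory GRing.Theory Num.Theory.
Import numFieldNormedType.Exports.
Local Open Scope classical_set_scope.
Local Open Scope ring_scope.

Definition time_avg (R : realType) (f : R -> R) (T : R) : R :=
  T^-1 * Rintegral (@lebesgue_measure R) `[0, T] f.

(* "Y strictly stationary and ergodic", in the sense fixed by the paper:
   for every measurable phi with E|phi(y_0)| < oo, the time averages of
   phi(y_t) converge almost surely to E phi(y_0). *)
Definition stationary_ergodic (d : measure_display) (Omega : measurableType d)
  (R : realType) (P : probability Omega R) (Y : R -> Omega -> R) : Prop :=
  forall phi : R -> R, measurable_fun setT phi ->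
    P.-integrable setT (fun w => (phi (Y 0 w))%:E) ->
    {ae P, forall w, time_avg (fun t => phi (Y t w)) T @[T --> +oo] -->
                     Rintegral P setT (fun w' => phi (Y 0 w'))}.

Definition Cp (R : realType) (p : nat) (g : R -> R) : Prop :=
  (forall k : nat, (k < p)%N -> forall x : R, derivable (derive1n k g) x 1) /\
  continuous (derive1n p g).

Definition lipschitz_glob (R : realType) (f : R -> R) : Prop :=
  exists L : R, forall a b : R, `|f a - f b| <= L * `|a - b|.

(* Main.v *)
Require Import Defs.
From HB Require Import structures.
From mathcomp Require Import all_boot all_order all_algebra.
From mathcomp Require Import all_classical all_reals all_analysis.
From mathcomp Require Import ring lra.
Import Order.TTheory GRing.Theory Num.Theory.
Import numFieldNormedType.Exports.
Local Open Scope classical_set_scope.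
Local Open Scope ring_scope.

Lemma mvt_abs (R : realType) (f : R -> R) (x y : R) :
  (forall z, derivable f z 1) ->
  exists c, `|c - y| <= `|x - y| /\ `|f x - f y| = `|derive1 f c| * `|x - y|.
Proof.
move=> df.
have cf : continuous f.
  by move=> z; apply: differentiable_continuous; apply/derivable1_diffP.
have dv : forall z : R, is_derive z (1:R) f (derive1 f z).
  by move=> z; rewrite derive1E; apply: derivableP.
have [xy|yx|->] := ltgtP x y.
- have [c + h] := MVT xy (fun z _ => dv z) (continuous_subspaceT cf).
  rewrite in_itv /= => /andP[c1 c2].
  exists c; split.
    by rewrite !ltr0_norm ?subr_lt0 //; lra.
  by rewrite distrC h normrM distrC.
- have [c + h] := MVT yx (fun z _ => dv z) (continuous_subspaceT cf).
  rewrite in_itv /= => /andP[c1 c2].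
  exists c; split.
    by rewrite !gtr0_norm ?subr_gt0 //; lra.
  by rewrite h normrM.
- by exists y; rewrite !subrr normr0 mulr0.
Qed.

Lemma taylor_bound (R : realType) (L : R) (m : nat) : 0 <= L ->
  forall f : R -> R,
  (forall k, (k < m)%N -> forall z, derivable (derive1n k f) z 1) ->
  (forall a b, `|derive1n m f a - derive1n m f b| <= L * `|a - b|) ->
  forall x y, `|x - y| <= 1 ->
  `|f x - f y| <= `|x - y| * (\sum_(0 <= k < m) `|derive1n k.+1 f y| + L).
Proof.
move=> L0; elim: m => [|m ih] f hd hl x y hxy.
  by rewrite big_geq // add0r mulrC; exact: hl.
have [c [hc he]] := @mvt_abs R f x y (fun z => hd 0%N (ltn0Sn _) z).
have hd' : forall k, (k < m)%N -> forall z, derivable (derive1n k (derive1 f)) z 1.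
  by move=> k km z; rewrite -derive1Sn; apply: hd.
have hl' : forall a b, `|derive1n m (derive1 f) a - derive1n m (derive1 f) b| <= L * `|a - b|.
  by move=> a b; rewrite -derive1Sn; apply: hl.
have := ih _ hd' hl' c y (le_trans hc hxy).
move=> h1; rewrite he [X in X <= _]mulrC.
apply: ler_wpM2l => //.
rewrite big_nat_recl //.
under eq_bigr do rewrite derive1Sn.
set S := \sum_(0 <= i < m) _ in h1 *.
have S0 : 0 <= S + L by rewrite addr_ge0 // /S sumr_ge0.
have hcy : `|c - y| <= 1 := le_trans hc hxy.
have h2 : `|c - y| * (S + L) <= S + L by rewrite ler_piMl.
have h4 : `|derive1 f c| <= `|derive1 f c - derive1 f y| + `|derive1 f y|.
  by have := ler_normD (derive1 f c - derive1 f y) (derive1 f y); rewrite subrK.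
have h5 := le_trans h1 h2; rewrite derive1n1; lra.
Qed.

Lemma arith_key (R : realType) (A B C P Q Z N W : R) : A - B = C -> P - Q = Z -> C <= Z -> 0 <= Q ->
  P = W -> N <= A -> N <= B + W.
Proof. move=> *; lra. Qed.

Lemma inv_small (R : realType) (C e T : R) : 0 < e -> 2 * `|C| / e < T -> T^-1 * C < e / 2.
Proof.
move=> e0 h.
have T0 : 0 < T by apply: le_lt_trans h; rewrite divr_ge0 // ?mulr_ge0 // ltW.
rewrite ltr_pdivrMr // in h.
rewrite mulrC ltr_pdivrMr //.
have eq : e / 2 * T = (T * e) / 2 by rewrite mulrC mulrA.
have := ler_norm C.
move: (T * e) h eq => P h eq; lra.
Qed.

Lemma final_arith (R : realType) (D X Y e eps K : R) :
  D <= X + Y -> X < e / 2 -> Y <= eps * K -> eps * K = e / 2 -> D < e.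
Proof. move=> *; lra. Qed.

Lemma small_arith (R : realType) (a c L : R) : `|c - a| < 1 -> a + L <= `|c| + 1 + L.
Proof. move=> h; have := ler_norm c; have := ler_norm (a - c); rewrite distrC; lra. Qed.

Section B.
Variable R : realType.
Local Notation mu := (@lebesgue_measure R).

Lemma cint (f : R -> R) : {within `[0, +oo[, continuous f} ->
  forall T : R, mu.-integrable `[0, T] (EFin \o f).
Proof.
move=> cf T; apply: continuous_compact_integrable; first exact: segment_compact.
apply: continuous_subspaceW cf => x /=; rewrite !in_itv /= => /andP[-> _] //.
Qed.

Lemma test (P : R -> Prop) : (\forall t \near +oo, P t) -> exists M, forall t, M < t -> P t.
Proof.
move=> [M [Mr HM]]. by exists M.
Qed.

Lemma int_cst_itv (T k : R) : 0 <= T -> \int[mu]_(x in `[0, T]) k = k * T.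
Proof.
move=> T0; rewrite Rintegral_cst //= lebesgue_measure_itv /= lte_fin.
move: T0; rewrite le_eqVlt => /predU1P[<-|T0]; first by rewrite ltxx /= mulr0.
by rewrite T0 /= oppr0 addr0.
Qed.


Lemma mitv (i : interval R) : measurable ([set` i] : set (measurableTypeR R)).
Proof. by []. Qed.

Lemma icst (k T : R) : mu.-integrable `[0, T] (EFin \o (fun _ : R => k)).
Proof. apply: cint; apply: continuous_subspaceT; exact: cst_continuous. Qed.

Lemma bound_D (u v s : R -> R) (L eps t0 T : R) :
  (forall T, mu.-integrable `[0, T] (EFin \o u)) ->
  (forall T, mu.-integrable `[0, T] (EFin \o v)) ->
  (forall T, mu.-integrable `[0, T] (EFin \o s)) ->
  0 <= t0 -> t0 < T -> 0 <= eps -> (forall t, 0 <= s t + L) ->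
  (forall t, t0 < t -> `|u t - v t| <= eps * (s t + L)) ->
  `|time_avg u T - time_avg v T| <=
    T^-1 * \int[mu]_(t in `[0, t0]) `|u t - v t| + eps * (time_avg s T + L).
Proof.
move=> iu iv isf t00 t0T eps0 sL0 hb.
have T0 : 0 < T by apply: le_lt_trans t0T.
have iuv : mu.-integrable `[0, T] (EFin \o (fun t => u t - v t)).
  have := integrableB (mitv _) (iu T) (iv T). apply: eq_integrable => //.
have iauv := integrable_norm iuv.
have isL : mu.-integrable `[0, T] (EFin \o (fun t => eps * (s t + L))).
  have := integrableZl (mitv _) eps (integrableD (mitv _) (isf T) (icst L T)).
  by apply: eq_integrable => //.
rewrite /time_avg -mulrBr -RintegralB // normrM gtr0_norm ?invr_gt0 //.
have [I HI] : exists I, \int[mu]_(t in `[0, T]) s t = I by eexists.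
have [C0 HC0] : exists C0, \int[mu]_(t in `[0, t0]) `|u t - v t| = C0 by eexists.
rewrite HI HC0.
have -> : T^-1 * C0 + eps * (T^-1 * I + L) = T^-1 * (C0 + eps * (I + L * T)).
  by field; rewrite gt_eqF.
apply: ler_wpM2l; first by rewrite invr_ge0 ltW.
have E1 : \int[mu]_(t in `[0, T]) `|u t - v t| - \int[mu]_(t in `[0, t0]) `|u t - v t| =
    \int[mu]_(x in `]t0, T]) `|u x - v x|.
  by apply: (@Rintegral_itvB R (fun t => `|u t - v t|) (BLeft 0) (BRight T) t0 iauv); rewrite bnd_simp // ltW.
have E2 : \int[mu]_(t in `[0, T]) (eps * (s t + L)) - \int[mu]_(t in `[0, t0]) (eps * (s t + L)) =
    \int[mu]_(x in `]t0, T]) (eps * (s x + L)).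
  by apply: (@Rintegral_itvB R (fun t => eps * (s t + L)) (BLeft 0) (BRight T) t0 isL); rewrite bnd_simp // ltW.
have sub : [set` `]t0, T]] `<=` [set` `[0, T]].
  by move=> x /=; rewrite !in_itv /= => /andP[h1 ->]; rewrite andbT (le_trans t00) // ltW.
have H3 : \int[mu]_(x in `]t0, T]) `|u x - v x| <= \int[mu]_(x in `]t0, T]) (eps * (s x + L)).
  apply: le_Rintegral => //.
  - exact: integrableS iauv.
  - exact: integrableS isL.
  - by move=> x /=; rewrite in_itv /= => /andP[h _]; apply: hb.
have H4 : 0 <= \int[mu]_(x in `[0, t0]) (eps * (s x + L)).
  by apply: Rintegral_ge0 => x _; apply: mulr_ge0.
have H5 : \int[mu]_(x in `[0, T]) (eps * (s x + L)) = eps * (I + L * T).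
  have isL' : mu.-integrable `[0, T] (EFin \o (fun t => s t + L)).
    have := integrableD (mitv _) (isf T) (icst L T).
    by apply: eq_integrable => //.
  rewrite RintegralZl //.
  rewrite RintegralD //; last exact: (icst L T).
  rewrite int_cst_itv ?ltW //; congr (_ * (_ + _)); exact: HI.
have H6 : `|\int[mu]_(t in `[0,T]) (u t - v t)| <= \int[mu]_(t in `[0,T]) `|u t - v t| :=
  le_normr_Rintegral (mitv _) iuv.
rewrite -HC0; exact: arith_key E1 E2 H3 H4 H5 H6.
Qed.


Lemma avg_lim (u v s dl : R -> R) (L m c : R) :
  0 <= L ->
  (forall T, mu.-integrable `[0, T] (EFin \o u)) ->
  (forall T, mu.-integrable `[0, T] (EFin \o v)) ->
  (forall T, mu.-integrable `[0, T] (EFin \o s)) ->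
  (forall t, 0 <= s t) ->
  time_avg v T @[T --> +oo] --> m ->
  time_avg s T @[T --> +oo] --> c ->
  `|dl t| @[t --> +oo] --> 0 ->
  (forall t, `|dl t| <= 1 -> `|u t - v t| <= `|dl t| * (s t + L)) ->
  time_avg u T @[T --> +oo] --> m.
Proof.
move=> L0 iu iv isf s0 hv hs hdl hb.
suff hD : (time_avg u T - time_avg v T) @[T --> +oo] --> 0.
  have E : (fun T => time_avg u T) = (fun T => (time_avg u T - time_avg v T) + time_avg v T).
    by apply: funext => T; rewrite subrK.
  rewrite E -[m]add0r; exact: (cvgD hD hv).
apply/cvgr0Pnorm_lt => e e0.
pose K := `|c| + 1 + L.
have K0 : 0 < K by rewrite /K -addrA ltr_pwDr // ltr_pwDl.
pose eps := e / (2 * K).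
have eps0 : 0 < eps by rewrite /eps divr_gt0 // mulr_gt0.
have epsK : eps * K = e / 2 by rewrite /eps; field; rewrite gt_eqF.
have hd2 : \forall t \near +oo, `|dl t| < eps /\ `|dl t| < 1.
  move/cvgr0Pnorm_lt : hdl => hdl.
  apply: filterS2 (hdl _ eps0) (hdl _ ltr01) => t.
  by rewrite normr_id.
have [M [Mr HM]] := hd2.
pose t0 := `|M| + 1.
have t00 : 0 <= t0 by rewrite /t0 addr_ge0.
have Mt0 : M < t0 by rewrite /t0; apply: le_lt_trans (ler_norm M) _; rewrite ltrDl.
have hb' : forall t, t0 < t -> `|u t - v t| <= eps * (s t + L).
  move=> t tt; have [h1 h2] := HM t (lt_trans Mt0 tt).
  apply: le_trans (hb t (ltW h2)) _; apply: ler_wpM2r; first by rewrite addr_ge0.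
  exact: ltW.
near=> T.
have hT : t0 < T by near: T; apply: nbhs_pinfty_gt; rewrite num_real.
have hsT : time_avg s T + L <= K.
  near: T; move/cvgrPdist_lt : hs => /(_ 1 ltr01).
  by apply: filterS => T h; apply: small_arith.
have hC : T^-1 * \int[mu]_(t in `[0, t0]) `|u t - v t| < e / 2.
  near: T; apply: filterS (nbhs_pinfty_gt _) => [T|]; first exact: inv_small.
  by rewrite num_real.
have bd := @bound_D u v s L eps t0 T iu iv isf t00 hT (ltW eps0) (fun t => addr_ge0 (s0 t) L0) hb'.
apply: final_arith bd hC _ epsK.
by apply: ler_wpM2l => //; exact: ltW.
Unshelve. all: by end_near.
Qed.

End B.

Lemma cont_sum (R : realType) (h : nat -> R -> R) (n : nat) :
  (forall k, (k < n)%N -> continuous (h k)) ->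
  continuous (fun y => \sum_(0 <= k < n) `|h k y|).
Proof.
elim: n => [_|n ih hc].
  by under eq_fun do rewrite big_geq //; exact: cst_continuous.
under eq_fun do rewrite big_nat_recr //.
move=> x; apply: (@continuousD _ _ _ (fun y => \sum_(0 <= k < n) `|h k y|) (fun y => `|h n y|)).
  by apply: ih => k kn; apply: hc; rewrite ltnS ltnW.
apply: continuous_comp; first exact: hc.
exact: norm_continuous.
Qed.

Theorem theorem3p2 (d : measure_display) (Omega : measurableType d)
  (R : realType) (P : probability Omega R) (X Y : R -> Omega -> R)
  (p : nat) (g : R -> R) :
  (forall t, 0 <= t -> measurable_fun setT (X t)) ->
  (forall t, 0 <= t -> measurable_fun setT (Y t)) ->
  (forall w, {within `[0, +oo[, continuous (fun t => X t w)}) ->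
  (forall w, {within `[0, +oo[, continuous (fun t => Y t w)}) ->
  stationary_ergodic P Y ->
  {ae P, forall w, `|X t w - Y t w| @[t --> +oo] --> 0} ->
  (1 <= p)%N ->
  Cp p g ->
  (forall k : nat, (k <= p)%N ->
     P.-integrable setT (fun w => (derive1n k g (Y 0 w))%:E)) ->
  lipschitz_glob (derive1n p g) ->
  {ae P, forall w, time_avg (fun t => g (X t w)) T @[T --> +oo] -->
                   Rintegral P setT (fun w' => g (Y 0 w'))}.
Proof.
move=> _ _ cX cY erg hxy p1 [hder hcont] hint [L0 hL].
have hL' : forall a b, `|derive1n p g a - derive1n p g b| <= `|L0| * `|a - b|.
  move=> a b; apply: le_trans (hL a b) _; apply: ler_wpM2r => //; exact: ler_norm.
have contk : forall k, (k <= p)%N -> continuous (derive1n k g).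
  move=> k; rewrite leq_eqVlt => /orP[/eqP -> //|kp] x.
  by apply: differentiable_continuous; apply/derivable1_diffP; exact: hder.
pose S := fun y => \sum_(0 <= k < p) `|derive1n k.+1 g y|.
have cS : continuous S by apply: cont_sum => k kp; apply: contk.
have cg : continuous g := contk 0%N (leq0n _).
have A0 := erg g (measurable_realfun.continuous_measurable_fun cg) (hint 0%N (leq0n _)).
have iS : P.-integrable setT (fun w => (S (Y 0 w))%:E).
  have : P.-integrable setT (fun w => \sum_(k <- index_iota 0 p | (k < p)%N)
       ((`|derive1n k.+1 g (Y 0 w)|)%:E : \bar R))%E.
    apply: integrable_sum => // k kp.
    by have := integrable_norm (hint k.+1 kp).
  apply: eq_integrable => // w _; rewrite sumEFin /S; congr EFin.
  rewrite big_nat_cond [RHS]big_nat_cond; apply: eq_bigl => k.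
  by rewrite andbT -andbA andbb.
have A1 := erg S (measurable_realfun.continuous_measurable_fun cS) iS.
apply: (@filterS3 _ _ _ _ _ _ _ _ A0 A1 hxy) => w h0 h1 h2.
apply: (@avg_lim R (fun t => g (X t w)) (fun t => g (Y t w)) (fun t => S (Y t w))
   (fun t => X t w - Y t w) `|L0| _ (\int[P]_w' S (Y 0 w'))) => //.
- by apply: cint => t; apply: continuous_comp; [exact: cX|exact: cg].
- by apply: cint => t; apply: continuous_comp; [exact: cY|exact: cg].
- by apply: cint => t; apply: continuous_comp; [exact: cY|exact: cS].
- by move=> t; apply: sumr_ge0.
- move=> t ht.
  exact: (@taylor_bound R `|L0| p (normr_ge0 _) g (fun k kp z => hder k kp z) hL' _ _ ht).
Qed.
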